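(* (1) Let $R$ be a uniquely clean ring. Then $R$ is $n$-torsion clean if and only if $U(R)$ has exponent $n$. (2) Let $R$ be a ring such that $R/J(R)$ is boolean and $J(R)$ is nil of bounded index. Then $R$ is $n$-torsion clean, where $n$ is the exponent of $U(R)$. Moreover, $n$ is a power of $2$.
   Context: All rings are associative with identity; $U(R)$ is the unit group and $J(R)$ the Jacobson radical. A ring is uniquely clean if every element has a unique expression as $e+u$ with $e$ idempotent and $u$ a unit. A ring $R$ is $n$-torsion clean if every $r\in R$ can be written $r=e+u$ with $e^2=e$, $u\in U(R)$, $u^n=1$, and $n$ is the smallest natural number with this property. An ideal $I$ is nil of bounded index if there is $k$ with $r^k=0$ for all $r\in I$. *)

(* Defs.v *)
(* Rings are (possibly non-commutative) unitRingType's: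
   associative, with identity, 1 != 0, and decidable units. *)
From mathcomp Require Import all_boot all_algebra.
Set Implicit Arguments. Unset Strict Implicit. Unset Printing Implicit Defensive.
Import GRing.Theory.
Local Open Scope ring_scope.

Section Defs.
Variable R : unitRingType.

Definition idempotent (e : R) : Prop := e * e = e.

Definition uniquely_clean : Prop :=
  forall r : R, exists! p : R * R,
    [/\ idempotent p.1, p.2 \is a GRing.unit & r = p.1 + p.2].

Definition torsion_clean_with (n : nat) : Prop :=
  forall r : R, exists e u : R,
    [/\ idempotent e, u \is a GRing.unit, u ^+ n = 1 & r = e + u].

Definition n_torsion_clean (n : nat) : Prop :=
  [/\ (0 < n)%N, torsion_clean_with n &
      forall m : nat, (0 < m)%N -> torsion_clean_with m -> (n <= m)%N].

Definition units_killed_by (n : nat) : Prop :=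
  forall u : R, u \is a GRing.unit -> u ^+ n = 1.

Definition unit_exponent (n : nat) : Prop :=
  [/\ (0 < n)%N, units_killed_by n &
      forall m : nat, (0 < m)%N -> units_killed_by m -> (n <= m)%N].

Definition left_ideal (I : R -> Prop) : Prop :=
  [/\ I 0,
      (forall x y, I x -> I y -> I (x - y)) &
      (forall r x, I x -> I (r * x))].

Definition maximal_left_ideal (I : R -> Prop) : Prop :=
  [/\ left_ideal I, ~ I 1 &
      forall K : R -> Prop, left_ideal K -> ~ K 1 ->
        (forall x, I x -> K x) -> forall x, K x -> I x].

Definition jacobson (x : R) : Prop :=
  forall I : R -> Prop, maximal_left_ideal I -> I x.

(* R/J(R) is boolean: every element of the quotient is idempotent,
   i.e. x^2 - x lies in J(R) for every x in R. *)
Definition boolean_mod_jacobson : Prop :=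
  forall x : R, jacobson (x * x - x).

Definition jacobson_nil_bounded : Prop :=
  exists k : nat, forall r : R, jacobson r -> r ^+ k = 0.

End Defs.

(* Main.v *)
Require Import Defs.
From mathcomp Require Import all_boot all_algebra.
From mathcomp Require Import ring zify.
From Stdlib Require Import Classical.
Import GRing.Theory.
Local Open Scope ring_scope.

Section Aux.
Variable R : unitRingType.

Lemma jac0 : jacobson (0 : R).
Proof. by move=> I [[]]. Qed.

Lemma jacB (x y : R) : jacobson x -> jacobson y -> jacobson (x - y).
Proof. by move=> hx hy I hI; case: (hI) => [[_ hB _]] _ _; apply: hB; [apply: hx|apply: hy]. Qed.

Lemma jacM (r x : R) : jacobson x -> jacobson (r * x).
Proof. by move=> hx I hI; case: (hI) => [[_ _ hM]] _ _; apply: hM; apply: hx. Qed.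

Lemma jacN (x : R) : jacobson x -> jacobson (- x).
Proof. by move=> hx; rewrite -sub0r; apply: jacB => //; apply: jac0. Qed.

Lemma jacD (x y : R) : jacobson x -> jacobson y -> jacobson (x + y).
Proof. by move=> hx hy; rewrite -[y]opprK; apply: jacB => //; apply: jacN. Qed.

Lemma nil_unit (m : R) k : m ^+ k = 0 -> (1 + m) \is a GRing.unit.
Proof.
move=> hm; set S := \sum_(i < k) (- m) ^+ i.
have h1 : (- m) ^+ k - 1 = (- m - 1) * S by rewrite subrX1.
rewrite exprNn hm mulr0 sub0r in h1.
have h2 : (1 + m) * S = 1.
  have -> : 1 + m = - (- m - 1) by rewrite opprB opprK.
  by rewrite mulNr -h1 opprK.
have cS : GRing.comm (1 + m) S.
  rewrite /S; apply: commr_sum => i _; apply: commrX.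
  apply: commrN; apply: commr_sym; apply: commrD; [exact: commr1 | exact: commr_refl].
apply/unitrP; exists S; split; [by rewrite -cS | exact: h2].
Qed.

Lemma idem_pow (e : R) n : e * e = e -> e ^+ n.+1 = e.
Proof. by move=> he; elim: n => // n IH; rewrite exprS IH. Qed.

Lemma poly_ids (a : R) : let n := a*a - a in let a' := 3*(a*a) - 2*(a*a*a) in
  a'*a' - a' = (4*n-3)*(n*n) /\ a' - a = (1 - 2 * a) * n.
Proof.
have cfu : commr_rmorph (intmul (1:R)) a.
  by move=> z; apply: commrMz; apply: commr1.
move=> n a'.
have P1 : let n := 'X*'X - 'X in let a' := 3*('X*'X) - 2*('X*'X*'X) in a'*a' - a' = (4*n-3)*(n*n) :> {poly int}
  by move=> /=; ring.
have P2 : let n := 'X*'X - 'X in let a' := 3*('X*'X) - 2*('X*'X*'X) in a' - 'X = (1 - 2*'X)*n :> {poly int}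
  by move=> /=; ring.
split.
  move: (congr1 (horner_morph cfu) P1).
  by rewrite /= !(rmorphB, rmorphM, rmorphD, rmorph1); rewrite !(_ : forall p, _ p = horner_morph cfu p) // horner_morphX.
move: (congr1 (horner_morph cfu) P2).
by rewrite /= !(rmorphB, rmorphM, rmorphD, rmorph1); rewrite !(_ : forall p, _ p = horner_morph cfu p) // horner_morphX.
Qed.

Hypothesis hbool : boolean_mod_jacobson R.

Lemma lift j : forall a : R, (a*a - a) ^+ j.+1 = 0 ->
  exists e, e * e = e /\ jacobson (e - a).
Proof.
elim: j {-2}j (leqnn j) => [|J IH] j hj a ha.
  move: hj; rewrite leqn0 => /eqP hj; subst j.
  exists a; split; last by rewrite subrr; apply: jac0.
  by apply/eqP; rewrite -subr_eq0 -ha expr1.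
case: j hj ha => [|j] hj ha.
  exists a; split; last by rewrite subrr; apply: jac0.
  by apply/eqP; rewrite -subr_eq0 -ha expr1.
set n := a * a - a in ha.
set a' := 3*(a*a) - 2*(a*a*a).
have [E1 E2] := poly_ids a.
have cn : GRing.comm (4*n-3) (n*n).
  apply: commr_sym; apply: commrB; last exact: commr_nat.
  apply: commrM; [exact: commr_nat | apply: commr_sym; apply: commrM; exact: commr_refl].
have hod := odd_double_half j.+1.
have hb : (odd j.+1 <= 1)%N by case: (odd j.+1).
have hn' : (a' * a' - a') ^+ (j.+1)./2.+1 = 0.
  rewrite E1 exprMn_comm // -[(a*a-a)*(a*a-a)]expr2 -exprM.
  have -> : (2 * ((j.+1)./2).+1 = j.+2 + (2 * ((j.+1)./2).+1 - j.+2))%N.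
    rewrite subnKC //. rewrite -muln2 in hod. lia.
  by rewrite exprD ha mul0r mulr0.
have hlt : (((j.+1)./2) <= J)%N.
  rewrite -muln2 in hod. lia.
have [e [he hJ]] := IH _ hlt a' hn'.
exists e; split => //.
have -> : e - a = (e - a') + (a' - a) by rewrite addrA subrK.
apply: jacD => //; rewrite E2; apply: jacM; exact: hbool.
Qed.

Variable k : nat.
Hypothesis hnil : forall r : R, jacobson r -> r ^+ k.+1 = 0.

Lemma clean (r : R) : exists e u : R, [/\ e * e = e, u \is a GRing.unit & r = e + u].
Proof.
have [e [he hJ]] := @lift k r (hnil _ (hbool r)).
set w := e + e - 1.
set d := r - e.
have hd : jacobson d by rewrite /d -opprB; apply: jacN.
have ww : w * w = 1.
  have : (e + e - 1) * (e + e - 1) - 1 = 4 * (e * e - e).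
    have cfu : commr_rmorph (intmul (1:R)) e.
      by move=> z; apply: commrMz; apply: commr1.
    have Q : ('X + 'X - 1) * ('X + 'X - 1) - 1 = 4 * ('X * 'X - 'X) :> {poly int} by ring.
    move: (congr1 (horner_morph cfu) Q).
    by rewrite /= !(rmorphB, rmorphM, rmorphD, rmorph1); rewrite !(_ : forall p, _ p = horner_morph cfu p) // horner_morphX.
  by rewrite he subrr mulr0 => /eqP; rewrite subr_eq0 => /eqP.
exists (1 - e), (w * (1 + w * d)); split.
- by rewrite !(mulrBl, mulrBr, mul1r, mulr1, he) subrr subr0.
- rewrite unitrMr; first by apply: nil_unit; apply: hnil; apply: jacM.
  by apply/unitrP; exists w.
- rewrite mulrDr mulr1 mulrA ww mul1r /w /d.
  by rewrite (addrC (e + e - 1)) addrA addrC -!addrA addrC !addrA subrK addrC !addrA subrK addrK.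
Qed.

Lemma unitJ (u : R) : u \is a GRing.unit -> jacobson (u - 1).
Proof.
move=> hu; have := @jacM u^-1 _ (hbool u).
by rewrite mulrBr mulrA mulVr // mul1r.
Qed.

Lemma twoJ : jacobson (2%:R : R).
Proof. by have := hbool (-1); rewrite mulrNN mulr1 opprK. Qed.

Lemma tc_units m : torsion_clean_with R m -> units_killed_by R m.
Proof.
move=> htc v hv; have [e [u [he hu hum hvu]]] := htc v.
have hJ : jacobson e.
  have -> : e = (v - 1) - (u - 1) by rewrite opprB addrA subrK hvu addrK.
  by apply: jacB; apply: unitJ.
have e0 : e = 0 by rewrite -(idem_pow e k he); apply: hnil.
by rewrite hvu e0 add0r.
Qed.

Lemma kill : units_killed_by R (2 ^ (2 * k.+1)).
Proof.
move=> u hu.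
set K := k.+1.
set N := (2 ^ (2 * K))%N.
set x := u - 1.
have hx : x ^+ K = 0 by apply: hnil; apply: unitJ.
have ht : (2%:R : R) ^+ K = 0 by apply: hnil; apply: twoJ.
have -> : u = x + 1 by rewrite subrK.
rewrite exprD1n big_ord_recl /= expr0 bin0 mulr1n big1 ?addr0 // => i _.
rewrite /bump /= add1n.
case: (leqP K i.+1) => hKi.
  by rewrite -(subnKC hKi) exprD hx mul0r mul0rn.
have hiN : (i < N)%N by [].
have hdiv : (2 ^ K %| 'C(N, i.+1))%N.
  have hC : (0 < 'C(N, i.+1))%N by rewrite bin_gt0.
  have hD : (0 < 'C(N.-1, i))%N by rewrite bin_gt0; lia.
  have key := mul_bin_diag N i.
  have hl1 : logn 2 (N * 'C(N.-1, i)) = (2 * K + logn 2 'C(N.-1, i))%N.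
    by rewrite lognM ?expn_gt0 // pfactorK.
  have hl2 : logn 2 (i.+1 * 'C(N, i.+1)) = (logn 2 i.+1 + logn 2 'C(N, i.+1))%N.
    by rewrite lognM.
  have hl3 : (logn 2 i.+1 < K)%N.
    have h1 : (2 ^ logn 2 i.+1 <= i.+1)%N by apply: dvdn_leq => //; apply: pfactor_dvdnn.
    have h2 : (K < 2 ^ K)%N by apply: ltn_expl.
    by rewrite -(@ltn_exp2l 2) //; lia.
  rewrite pfactor_dvdn //.
  rewrite key in hl1; lia.
case/dvdnP: hdiv => q ->.
by rewrite mulrnA -mulr_natr natrX ht mulr0.
Qed.

End Aux.

Lemma least_ex (P : nat -> Prop) N : (0 < N)%N -> P N ->
  exists n, [/\ (0 < n)%N, P n & forall m, (0 < m)%N -> P m -> (n <= m)%N].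
Proof.
elim: N {-2}N (leqnn N) => [|M IH] N hN hpos hP; first by lia.
case: (classic (exists m, [/\ (0 < m)%N, (m < N)%N & P m])) => [[m [h1 h2 h3]]|hno].
  by apply: (IH m) => //; lia.
exists N; split => // m hm hPm.
rewrite leqNgt; apply/negP => hlt; apply: hno; exists m; split => //.
Qed.


Lemma exp_dvd (R : unitRingType) n N : unit_exponent R n -> units_killed_by R N ->
  (n %| N)%N.
Proof.
move=> [hn hk hmin] hN; rewrite /dvdn; apply/eqP.
case: (posnP (N %% n)) => // hr; exfalso.
have hkr : units_killed_by R (N %% n).
  move=> u hu; have := hN u hu.
  by rewrite {1}(divn_eq N n) exprD mulnC exprM hk // expr1n mul1r.
have := hmin _ hr hkr; have := ltn_pmod N hn; lia.
Qed.

Theorem corollary1p4 :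
  (forall (R : unitRingType) (n : nat),
      uniquely_clean R -> (n_torsion_clean R n <-> unit_exponent R n))
  /\
  (forall R : unitRingType,
      boolean_mod_jacobson R -> jacobson_nil_bounded R ->
      exists n : nat,
        [/\ unit_exponent R n, n_torsion_clean R n &
            exists k : nat, n = (2 ^ k)%N]).
Proof.
split.
  move=> R n huc.
  have eq : forall m, torsion_clean_with R m <-> units_killed_by R m.
    move=> m; split.
      move=> htc v hv; have [e [u [he hu hum hv']]] := htc v.
      have [p [hp huniq]] := huc v.
      have h1 := huniq (0, v) (And3 (mul0r 0) hv (esym (add0r v))).
      have h2 := huniq (e, u) (And3 he hu hv').
      by rewrite h1 in h2; case: h2 => _ ->.
    move=> hk r; have [[e u] [[he hu hr] _]] := huc r.
    by exists e, u; split => //; apply: hk.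
  rewrite /n_torsion_clean /unit_exponent; split.
    case=> h0 h1 h2; split => //; first by apply/eq.
    by move=> m hm /eq; apply: h2.
  case=> h0 h1 h2; split => //; first by apply/eq.
  by move=> m hm /eq; apply: h2.
move=> R hb [k0 hk0].
have hnil : forall r : R, jacobson r -> r ^+ k0.+1 = 0.
  by move=> r hr; rewrite exprSr hk0 // mul0r.
have [n [hn hk hmin]] := @least_ex (units_killed_by R) (2 ^ (2 * k0.+1)) (expn_gt0 _ _)
   (@kill R hb k0 hnil).
have hue : unit_exponent R n by [].
exists n; split => //.
  split => //.
    move=> r; have [e [u [he hu hr]]] := @clean R hb k0 hnil r.
    by exists e, u; split => //; apply: hk.
  by move=> m hm /(@tc_units R hb k0 hnil); apply: hmin.
have := @exp_dvd R _ _ hue (@kill R hb k0 hnil).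
case/(dvdn_pfactor _ _ (isT : prime 2)) => m _ ->.
by exists m.
Qed.
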